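(* Let $G$ be a finite transitive permutation group on a set $\Omega$, let $\alpha\in\Omega$, and let $x\in G_\alpha$ have prime order. Then $x$ is quasi-semiregular on $\Omega$ if and only if $\mathrm{Sub}_G(x)\le G_\alpha$.
   Context: For $x\in G$, the subnormaliser is $\mathrm{Sub}_G(x)=\langle g\in G : \langle x\rangle \text{ is subnormal in } \langle x,g\rangle\rangle$. A permutation $g$ is quasi-semiregular if $\langle g\rangle$ has a unique fixed point and acts semiregularly (only the identity fixes a point) on the remaining points. *)

(* Defs.v *)
From mathcomp Require Import all_boot all_fingroup all_solvable.
Set Implicit Arguments. Unset Strict Implicit. Unset Printing Implicit Defensive.
Local Open Scope group_scope.

Definition subnormaliser (gT : finGroupType) (G : {set gT}) (x : gT) : {set gT} :=
  <<[set g in G | <[x]> <|<| <<[set x; g]>> ]>>.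

Definition quasi_semiregular (T : finType) (g : {perm T}) : Prop :=
  exists a : T,
    [/\ forall h, h \in <[g]> -> h a = a,
        forall b, (forall h, h \in <[g]> -> h b = b) -> b = a
      & forall b h, b != a -> h \in <[g]> -> h b = b -> h = 1].

(* Main.v *)
Require Import Defs.
From mathcomp Require Import all_boot all_fingroup all_solvable.
Set Implicit Arguments. Unset Strict Implicit. Unset Printing Implicit Defensive.
Local Open Scope group_scope.

Lemma sn_norm (gT : finGroupType) (p : nat) (Q : {group gT}) (x g : gT) :
  p.-group Q -> x \in Q -> g \in 'N(Q) -> <[x]> <|<| <<[set x; g]>>.
Proof.
move=> pQ xQ gN.
set L := <<(Q :|: [set g])>>.
have QL : Q \subset L by rewrite sub_gen // subsetUl.
have nQL : L \subset 'N(Q) by rewrite gen_subG subUset normG sub1set.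
have snQ : <[x]> <|<| Q by apply: nilpotent_subnormal; [exact: pgroup_nil pQ| rewrite cycle_subG].
have snL : <[x]> <|<| L.
  apply: subnormal_trans snQ _; apply: normal_subnormal; exact/andP.
have KL : <<[set x; g]>> \subset L.
  rewrite gen_subG; apply/subsetP=> y; rewrite !inE => /orP[]/eqP->.
    by apply: (subsetP QL).
  by apply: mem_gen; rewrite !inE eqxx orbT.
have := setI_subnormal KL snL.
have -> : <[x]> :&: <<[set x; g]>> = <[x]>.
  apply/setIidPl; rewrite cycle_subG; apply: mem_gen; by rewrite !inE eqxx.
done.
Qed.

Lemma dirB (T : finType) (G : {group {perm T}}) (alpha : T) (x : {perm T}) :
  x alpha = alpha -> (forall b, x b = b -> b = alpha) ->
  subnormaliser G x \subset 'C_G[alpha | 'P].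
Proof.
move=> xa hfix.
have step : forall A B : {set {perm T}}, x \in A -> A \subset 'C[alpha | 'P] -> A <| B ->
    B \subset 'C[alpha | 'P].
  move=> A B xA AC /andP[AB nAB]; apply/subsetP=> b bB.
  have xbA : x ^ b \in A by rewrite memJ_norm // (subsetP nAB).
  have := subsetP AC _ xbA; move/astab1P; rewrite /= apermE /conjg !permM => e.
  apply/astab1P => /=.
  have fb : x (b^-1 alpha) = b^-1 alpha.
    by rewrite -{2}e permK.
  have := hfix _ fb => e2.
  by rewrite apermE -{1}e2 permKV.
have path_ind : forall (s : seq {group {perm T}}) (A : {group {perm T}}), normal.-series A s -> x \in A ->
    A \subset 'C[alpha | 'P] -> last A s \subset 'C[alpha | 'P].
  elim=> [|B s IH] A //= /andP[nAB ps] xA AC.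
  apply: IH => //; first by move: nAB => /andP[/subsetP ->].
  exact: step nAB.
rewrite gen_subG; apply/subsetP=> g; rewrite inE => /andP[gG sn].
rewrite inE gG /=.
move/subnormalP: sn => [s ps ls].
have : last <[x]>%G s \subset 'C[alpha | 'P].
  apply: (path_ind s <[x]>%G ps (cycle_id x)); rewrite cycle_subG; exact/astab1P.
rewrite ls => /subsetP; apply; apply: mem_gen; by rewrite !inE eqxx orbT.
Qed.

Lemma in_sub (T : finType) (G : {group {perm T}}) (p : nat) (Q : {group {perm T}}) (x g : {perm T}) :
  p.-group Q -> x \in Q -> g \in G -> g \in 'N(Q) -> g \in subnormaliser G x.
Proof.
move=> pQ xQ gG gN; apply: mem_gen; rewrite inE gG /=; exact: sn_norm pQ xQ gN.
Qed.

Lemma dirA (T : finType) (G : {group {perm T}}) (alpha : T) (x : {perm T}) :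
  [transitive G, on [set: T] | 'P] ->
  x \in 'C_G[alpha | 'P] ->
  prime #[x] ->
  subnormaliser G x \subset 'C_G[alpha | 'P] ->
  forall b, x b = b -> b = alpha.
Proof.
move=> trG /setIP[xG /astab1P xa] prx sub b xb.
apply/eqP; apply/negPn/negP => nba.
set p := #[x].
have px : p.-group <[x]> by rewrite /pgroup -orderE pnat_id.
have NC : forall (Q : {group {perm T}}) g, p.-group Q -> x \in Q -> g \in G -> g \in 'N(Q) ->
    g \in 'C[alpha | 'P].
  move=> Q g pQ xQ gG gN.
  by have /setIP[] := subsetP sub g (in_sub pQ xQ gG gN).
have QC : forall Q : {group {perm T}}, p.-group Q -> x \in Q -> Q \subset G ->
    Q \subset 'C[alpha | 'P].
  move=> Q pQ xQ QG; apply/subsetP => g gQ.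
  exact: NC pQ xQ (subsetP QG g gQ) (subsetP (normG Q) g gQ).
have xsG : <[x]> \subset G by rewrite cycle_subG.
have [P sylP xP] := Sylow_superset xsG px.
have xP' : x \in P by rewrite -cycle_subG.
have PC := QC P (pHall_pgroup sylP) (xP' : x \in P) (pHall_sub sylP).
have [h hG bh] := atransP2 trG (in_setT alpha) (in_setT b).
rewrite /= apermE in bh.
set Gb := 'C_G[b | 'P]%G.
have conjIn : forall Q : {group {perm T}}, Q \subset G -> Q \subset 'C[alpha | 'P] ->
    Q :^ h \subset Gb.
  move=> Q QG QCa; rewrite subsetI -(conjGid hG) conjSg QG /=.
  by rewrite bh -[h alpha]/(aperm alpha h) astab1_act conjSg.
have sylPh : p.-Sylow(Gb) (P :^ h).
  apply: pHall_subl (conjIn P (pHall_sub sylP) PC) (subsetIl _ _) _.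
  by rewrite pHallJ.
have xGb : <[x]> \subset Gb.
  by rewrite cycle_subG inE xG; apply/astab1P.
have [k kGb xQ] := Sylow_subJ sylPh xGb px.
have kG : k \in G by case/setIP: kGb.
set Q := conjG_group (conjG_group P h) k.
have QGb : Q \subset Gb.
  by rewrite /= -(conjGid kGb) conjSg conjIn // (pHall_sub sylP).
have sylQ : p.-Sylow(G) Q by rewrite /= !pHallJ.
have xQ' : x \in Q by rewrite -cycle_subG.
have QCa := QC Q (pHall_pgroup sylQ) xQ' (pHall_sub sylQ).
have sylQh : p.-Sylow(Gb) (Q :^ h).
  apply: pHall_subl (conjIn Q (pHall_sub sylQ) QCa) (subsetIl _ _) _.
  by rewrite pHallJ.
have sylQb : p.-Sylow(Gb) Q := pHall_subl QGb (subsetIl _ _) sylQ.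
have [k' k'Gb eq] := Sylow_trans sylQh sylQb.
have k'G : k' \in G by case/setIP: k'Gb.
have gN : h * k' \in 'N(Q) by apply/normP; rewrite conjsgM -eq.
have := NC Q (h * k') (pHall_pgroup sylQ) xQ' (groupM hG k'G) gN.
move/astab1P; rewrite /= apermE permM -bh.
case/setIP: k'Gb => _ /astab1P; rewrite /= apermE => ->.
by move=> e; rewrite e eqxx in nba.
Qed.

Theorem theorem3p3 (T : finType) (G : {group {perm T}}) (alpha : T) (x : {perm T}) :
  [transitive G, on [set: T] | 'P] ->
  x \in 'C_G[alpha | 'P] ->
  prime #[x] ->
  (quasi_semiregular x <-> subnormaliser G x \subset 'C_G[alpha | 'P]).
Proof.
move=> trG xGa prx.
have xa : x alpha = alpha by case/setIP: xGa => _ /astab1P.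
have cyc_fix : forall b, x b = b -> forall h, h \in <[x]> -> h b = b.
  move=> b xb h hx.
  have : <[x]> \subset 'C[b | 'P] by rewrite cycle_subG; apply/astab1P.
  by move/subsetP/(_ h hx)/astab1P.
split.
  case=> a [h1 h2 h3]; apply: dirB => // b xb.
  rewrite (h2 b (cyc_fix b xb)); apply: esym; apply: h2; exact: cyc_fix.
move=> sub; have hfix := dirA trG xGa prx sub.
exists alpha; split.
- exact: cyc_fix.
- by move=> b hb; apply: hfix; apply: hb; exact: cycle_id.
- move=> b h nba hx hb; apply/eqP; apply/negPn/negP => nh.
  have hsub : <[h]> \subset <[x]> by rewrite cycle_subG.
  have cx : <[h]> = <[x]>.
    apply/eqP; rewrite eqEcard hsub /=.
    have dv := cardSg hsub.
    have ne : #|<[h]>| != 1%N by rewrite -orderE order_eq1.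
    by rewrite (prime_nt_dvdP prx ne dv) -orderE.
  have xh : x \in <[h]> by rewrite cx cycle_id.
  have : <[h]> \subset 'C[b | 'P] by rewrite cycle_subG; apply/astab1P.
  move/subsetP/(_ x xh)/astab1P => /= xb.
  by move: nba; rewrite (hfix b xb) eqxx.
Qed.
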